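(* Let $\Omega\subset\mathbb{R}^n$ be connected, bounded and of class $C^\infty$, fix $\alpha\in(0,1)$ and distinct integers $n_1,\dots,n_K$. Let $(a^{ij}_\epsilon),(b^i_\epsilon),(\rho_\epsilon)\in\mathcal{E}_M(\overline{\Omega})$ satisfy for all $\epsilon<1$: $a^{ij}_\epsilon=a^{ji}_\epsilon$, $a^{ij}_\epsilon\xi_i\xi_j\ge\lambda_\epsilon|\xi|^2\ge C_1\epsilon^{a_1}|\xi|^2$; for all $k$, $|a^{ij}_\epsilon|_{k,\alpha;\Omega},|b^i_\epsilon|_{k,\alpha;\Omega}\le\Lambda_{k,\epsilon}\le C_2(k)\epsilon^{a_2(k)}$; $\{n_i:n_i<0\}\ne\emptyset$, $n_1=\min\{n_i:n_i<0\}$, $b^1_\epsilon\le-C_3\epsilon^{a_3}$; $\{n_i:n_i>0\}\ne\emptyset$, $n_K=\max\{n_i:n_i>0\}$, $b^K_\epsilon\ge C_4\epsilon^{a_4}$; $\rho_\epsilon\ge C_5\epsilon^{a_5}$, with positive constants $C_1,C_2(k),\dots,C_5$ and reals $a_1,a_2(k),\dots,a_5$ independent of $\epsilon$. Define $$\alpha'_\epsilon=\sup\Big\{c>0:\sum_{i=1}^K\sup_{x\in\overline{\Omega}}b^i_\epsilon(x)y^{n_i}<0\ \forall y\in(0,c)\Big\},\quad \beta'_\epsilon=\inf\Big\{c\in\mathbb{R}:\sum_{i=1}^K\inf_{x\in\overline{\Omega}}b^i_\epsilon(x)y^{n_i}>0\ \forall y\in(c,\infty)\Big\},$$ $\alpha_\epsilon=\min\{\alpha'_\epsilon,\inf_{\partial\Omega}\rho_\epsilon\}$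 and $\beta_\epsilon=\max\{\beta'_\epsilon,\sup_{\partial\Omega}\rho_\epsilon\}$. Then the nets $(\alpha_\epsilon)$, $(\beta_\epsilon)$, $(1/\alpha_\epsilon)$ and $(1/\beta_\epsilon)$ belong to $\overline{\mathbb{C}}$, the ring of generalized constants.
   Context: $\overline{\mathbb{C}}$ is the quotient of the set of nets $(r_\epsilon)_{\epsilon\in(0,1]}$ of complex numbers with $|r_\epsilon|=O(\epsilon^a)$ as $\epsilon\to0$ for some $a\in\mathbb{R}$ (moderate nets), by the nets with $|r_\epsilon|=O(\epsilon^a)$ for every $a\in\mathbb{R}$; a net ''belongs to $\overline{\mathbb{C}}$'' if it is moderate. Hölder norm: $|u|_{k,\alpha;\Omega}=\sum_{j\le k}\sup_{|\beta|=j}\sup_{\overline{\Omega}}|D^\beta u|+\sup_{|\beta|=k}\sup_{x\ne y}|D^\beta u(x)-D^\beta u(y)|/|x-y|^\alpha$. $\mathcal{E}_M(\overline{\Omega})$ is the set of nets $(u_\epsilon)_{\epsilon\in(0,1]}\subset C^\infty(\overline{\Omega})$ such that for every $k$ there is $a\in\mathbb{R}$ with $\sup_{|\beta|\le k,x\in\overline{\Omega}}|D^\beta u_\epsilon|=O(\epsilon^a)$. *)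

(* Defs.v *)
From HB Require Import structures.
From mathcomp Require Import all_boot all_order all_algebra.
From mathcomp Require Import all_classical all_reals all_analysis.
Set Implicit Arguments. Unset Strict Implicit. Unset Printing Implicit Defensive.
Import Order.TTheory GRing.Theory Num.Theory.
Import numFieldNormedType.Exports.
Local Open Scope classical_set_scope.
Local Open Scope ring_scope.

Section Defs.
Variables (R : realType) (n : nat).
Notation pt := 'rV[R]_n.

Definition unitvec (i : 'I_n) : pt := delta_mx 0 i.

Definition partial (i : 'I_n) (u : pt -> R) : pt -> R :=
  fun x => derive u x (unitvec i).

Definition mlen (beta : 'I_n -> nat) : nat := (\sum_(i < n) beta i)%N.

Definition Dmulti (beta : 'I_n -> nat) (u : pt -> R) : pt -> R :=
  foldr (fun i g => iter (beta i) (partial i) g) u (enum 'I_n).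

Definition enorm (x : pt) : R := Num.sqrt (\sum_(i < n) x 0 i ^+ 2).

Definition bdry (A : set pt) : set pt := closure A `\` interior A.

Definition smooth_on (A : set pt) (u : pt -> R) : Prop :=
  forall beta x, A x ->
    {for x, continuous (Dmulti beta u)} /\
    (forall i, derivable (Dmulti beta u) x (unitvec i)).

Definition Cinf_closure (Omega : set pt) (u : pt -> R) : Prop :=
  {within closure Omega, continuous u} /\ smooth_on Omega u /\
  forall beta, exists g : pt -> R,
    {within closure Omega, continuous g} /\ {in Omega, Dmulti beta u =1 g}.

Definition smooth_map_on (A : set pt) (psi : pt -> pt) : Prop :=
  forall j : 'I_n, smooth_on A (fun x => psi x 0 j).

(* Omega is a bounded connected domain of class C^infty
   (Gilbarg-Trudinger definition: boundary locally straightened by a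
   C^infty diffeomorphism onto the half space x_n > 0) *)
Definition last_coord (y : pt) (P : R -> Prop) : Prop :=
  forall j : 'I_n, nat_of_ord j = n.-1 -> P (y 0 j).

Definition smooth_boundary (Omega : set pt) : Prop :=
  forall x0, bdry Omega x0 ->
    exists (r : R) (psi phi : pt -> pt) (D : set pt),
      0 < r /\ open D /\
      (forall x, ball x0 r x -> D (psi x) /\ phi (psi x) = x) /\
      (forall y, D y -> ball x0 r (phi y) /\ psi (phi y) = y) /\
      (forall x, ball x0 r x -> Omega x -> last_coord (psi x) (fun t => 0 < t)) /\
      (forall x, ball x0 r x -> bdry Omega x -> last_coord (psi x) (fun t => t = 0)) /\
      smooth_map_on (ball x0 r) psi /\ smooth_map_on D phi.

Definition smooth_domain (Omega : set pt) : Prop :=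
  open Omega /\ Omega !=set0 /\ connected Omega /\ bounded_set Omega /\
  smooth_boundary Omega.

(* Hoelder norm |u|_{k,alpha;Omega}, as an extended real (possibly +oo).
   Suprema over closure Omega of (continuous extensions of) derivatives are
   taken over Omega, which gives the same value. *)
Definition holder_norm (Omega : set pt) (k : nat) (al : R) (u : pt -> R)
  : \bar R :=
  (\sum_(j < k.+1)
     ereal_sup [set z | exists beta x, mlen beta = j /\ Omega x /\
                         z = (`|Dmulti beta u x|)%:E]
   + ereal_sup [set z | exists beta x y, mlen beta = k /\ Omega x /\ Omega y /\
                         x != y /\
                         z = (`|Dmulti beta u x - Dmulti beta u y|
                               / powR (enorm (x - y)) al)%:E])%E.

Definition EMnet (Omega : set pt) (u : R -> pt -> R) : Prop :=
  (forall eps, 0 < eps <= 1 -> Cinf_closure Omega (u eps)) /\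
  forall k : nat, exists (a C eta : R), 0 < eta /\
    forall eps, 0 < eps < eta -> eps <= 1 ->
      forall beta x, (mlen beta <= k)%N -> Omega x ->
        `|Dmulti beta (u eps) x| <= C * powR eps a.

End Defs.

(* a net (r_eps) of reals is moderate, i.e. belongs to the ring of
   generalized constants: |r_eps| = O(eps^a) as eps -> 0 for some a *)
Definition moderate {R : realType} (r : R -> R) : Prop :=
  exists (a C eta : R), 0 < eta /\
    forall eps, 0 < eps < eta -> eps <= 1 -> `|r eps| <= C * powR eps a.

Section Bounds.
Variables (R : realType) (n : nat).
Notation pt := 'rV[R]_n.

Definition sup_on (A : set pt) (f : pt -> R) : R := sup [set f x | x in A].
Definition inf_on (A : set pt) (f : pt -> R) : R := inf [set f x | x in A].

Definition alpha' (Omega : set pt) (K : nat) (ni : nat -> int)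
    (b : nat -> R -> pt -> R) (eps : R) : R :=
  sup [set c | 0 < c /\ forall y, 0 < y < c ->
         \sum_(1 <= i < K.+1) sup_on (closure Omega) (b i eps) * y ^ ni i < 0].

Definition beta' (Omega : set pt) (K : nat) (ni : nat -> int)
    (b : nat -> R -> pt -> R) (eps : R) : R :=
  inf [set c | forall y, c < y ->
         0 < \sum_(1 <= i < K.+1) inf_on (closure Omega) (b i eps) * y ^ ni i].

Definition alpha_net Omega K ni b (rho : R -> pt -> R) (eps : R) : R :=
  Num.min (alpha' Omega K ni b eps) (inf_on (bdry Omega) (rho eps)).

Definition beta_net Omega K ni b (rho : R -> pt -> R) (eps : R) : R :=
  Num.max (beta' Omega K ni b eps) (sup_on (bdry Omega) (rho eps)).
End Bounds.

(* Main.v *)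
Set Warnings "-notation-overridden,-ambiguous-paths,-notation-incompatible-prefix".
Require Import Defs.
From HB Require Import structures.
From mathcomp Require Import all_boot all_order all_algebra.
From mathcomp Require Import all_classical all_reals all_analysis.
Import Order.TTheory GRing.Theory Num.Theory.
Import numFieldNormedType.Exports.
Local Open Scope classical_set_scope.
Local Open Scope ring_scope.
From mathcomp Require Import zify ring lra.
Section Mod.
Variable R : realType.
Implicit Types f g : R -> R.

Lemma powR_anti (e a b : R) : 0 < e <= 1 -> a <= b -> powR e b <= powR e a.
Proof. move=> he hab; exact: (ger_powR he hab). Qed.

Lemma mod_le f g : moderate f ->
  (exists eta : R, 0 < eta /\ forall e, 0 < e < eta -> e <= 1 -> `|g e| <= `|f e|) ->
  moderate g.
Proof.
move=> [a [C [eta [he H]]]] [eta' [he' H']].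
exists a, C, (Num.min eta eta'); split; first by rewrite lt_min he he'.
move=> e /andP[e0]; rewrite lt_min => /andP[e1 e2] e3.
apply: le_trans (H' e _ e3) (H e _ e3); by rewrite e0.
Qed.

Lemma mod_cst (c : R) : moderate (fun _ : R => c).
Proof.
exists 0, `|c|, 1; split => // e _ _; by rewrite powRr0 mulr1.
Qed.

Lemma mod_pow (C a : R) : moderate (fun e : R => C * powR e a).
Proof.
exists a, `|C|, 1; split => // e /andP[e0 _] _.
by rewrite normrM (ger0_norm (powR_ge0 _ _)).
Qed.

Lemma mod_C_ge0 (a C e r : R) : 0 < e -> `|r| <= C * powR e a -> 0 <= C.
Proof.
move=> e0 h; have : 0 <= C * powR e a by apply: le_trans h.
by rewrite pmulr_lge0 // powR_gt0.
Qed.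

Lemma mod_add f g : moderate f -> moderate g -> moderate (fun e => f e + g e).
Proof.
move=> [a [C [eta [he H]]]] [a' [C' [eta' [he' H']]]].
exists (Num.min a a'), (`|C| + `|C'|), (Num.min (Num.min eta eta') 1); split.
  by rewrite !lt_min he he' ltr01.
move=> e /andP[e0]; rewrite !lt_min => /andP[/andP[e1 e2] e4] e3.
have h1 := H e (ltac:(by rewrite e0 e1)) e3.
have h2 := H' e (ltac:(by rewrite e0 e2)) e3.
have hC := mod_C_ge0 _ _ _ _ e0 h1; have hC' := mod_C_ge0 _ _ _ _ e0 h2.
have ee : 0 < e <= 1 by rewrite e0 e3.
apply: le_trans (ler_normD _ _) _.
rewrite mulrDl; apply: lerD.
  apply: le_trans h1 _; rewrite ger0_norm //; apply: ler_wpM2l => //.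
  by apply: powR_anti; rewrite // ge_min lexx.
apply: le_trans h2 _; rewrite (ger0_norm hC'); apply: ler_wpM2l => //.
by apply: powR_anti; rewrite // ge_min lexx orbT.
Qed.

Lemma mod_mul f g : moderate f -> moderate g -> moderate (fun e => f e * g e).
Proof.
move=> [a [C [eta [he H]]]] [a' [C' [eta' [he' H']]]].
exists (a + a'), (C * C'), (Num.min eta eta'); split.
  by rewrite !lt_min he he'.
move=> e /andP[e0]; rewrite !lt_min => /andP[e1 e2] e3.
have h1 := H e (ltac:(by rewrite e0 e1)) e3.
have h2 := H' e (ltac:(by rewrite e0 e2)) e3.
have hC := mod_C_ge0 _ _ _ _ e0 h1; have hC' := mod_C_ge0 _ _ _ _ e0 h2.
rewrite powRD; last by apply/implyP => _; rewrite gt_eqF.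
rewrite normrM mulrACA; apply: ler_pM => //.
Qed.

Lemma mod_inv_pow (C a : R) : 0 < C -> moderate (fun e : R => (C * powR e a)^-1).
Proof.
move=> hC; exists (- a), (C^-1), 1; split => // e /andP[e0 _] _.
rewrite invfM powRN ger0_norm //.
by rewrite mulr_ge0 // invr_ge0 ?powR_ge0 // ltW.
Qed.

End Mod.
Section Cl.
Variables (R : realType) (n : nat).
Notation pt := 'rV[R]_n.

Lemma closure_bound (f : pt -> R) (A : set pt) (M : R) :
  {within closure A, continuous f} -> (forall x, A x -> `|f x| <= M) ->
  forall x, closure A x -> `|f x| <= M.
Proof.
move=> cf hA x cx; rewrite leNgt; apply/negP => hM.
have cv := (@subspace_continuousP _ (closure A) _ f).1 cf x cx.
have hnear : \forall t \near within (closure A) (nbhs x), M < `|f t|.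
  by apply: (cvgr_gt (`|f x|) (cvg_norm cv)).
have [z [Az Hz]] := cx _ hnear.
by move: (Hz (subset_closure Az)); rewrite ltNge (hA z Az).
Qed.

Lemma Dmulti0 (u : pt -> R) : Dmulti (fun _ => 0%N) u = u.
Proof. by rewrite /Dmulti; elim: (enum 'I_n) => //=. Qed.

Lemma mlen0 : mlen (fun _ : 'I_n => 0%N) = 0%N.
Proof. by rewrite /mlen big1. Qed.

Lemma EM_bound0 (Omega : set pt) (u : R -> pt -> R) : EMnet Omega u ->
  exists a C eta : R, 0 < eta /\ forall e, 0 < e < eta -> e <= 1 ->
    forall x, closure Omega x -> `|u e x| <= C * powR e a.
Proof.
move=> [hC hb]; have [a [C [eta [he H]]]] := hb 0%N.
exists a, C, eta; split => // e he1 he2.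
apply: closure_bound; first by have [c _] := hC e (ltac:(by case/andP: he1 => -> _)) .
move=> x Ox; have := H e he1 he2 (fun _ => 0%N) x; rewrite Dmulti0 mlen0; exact.
Qed.
End Cl.
Section Sup.
Variable R : realType.
Lemma sup_abs (E : set R) B : 0 <= B -> (forall y, E y -> `|y| <= B) -> `|sup E| <= B.
Proof.
move=> B0 hE; case: (pselect (E !=set0)) => hne.
  have ub : ubound E B by move=> y /hE /(le_trans (ler_norm y)).
  have [y0 Ey0] := hne.
  rewrite ler_norml; apply/andP; split; last exact: ge_sup.
  have hub : has_ubound E by exists B.
  have h2 : y0 <= sup E := ub_le_sup hub Ey0.
  apply: le_trans h2.
  by have := hE y0 Ey0; rewrite ler_norml => /andP[].
have -> : E = set0 by apply/seteqP; split => // y Ey; apply: hne; exists y.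
by rewrite sup0 normr0.
Qed.

Lemma inf_abs (E : set R) B : 0 <= B -> (forall y, E y -> `|y| <= B) -> `|inf E| <= B.
Proof.
move=> B0 hE; rewrite /inf normrN; apply: sup_abs => // y [x Ex <-].
by rewrite normrN; exact: hE.
Qed.
End Sup.
Section Pow.
Variable R : realType.

Lemma powz_le1 (y : R) (k m : int) : 0 < y -> y <= 1 -> k <= m -> y ^ m <= y ^ k.
Proof.
move=> y0 y1 km.
have : 0 <= m - k by rewrite subr_ge0.
have -> : m = k + (m - k) by rewrite addrC subrK.
rewrite addrC addKr.
case: (m - k) => [dn|dn] // _.
rewrite exprzDr ?unitfE ?gt_eqF //.
change (y ^ (dn:int)) with (y ^+ dn).
rewrite ler_piMr ?exprn_ile1 ?(ltW y0) // ?exprz_ge0 ?(ltW y0) //; exact: exprz_gt0.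
Qed.

Lemma powz_ge1 (y : R) (k m : int) : 1 <= y -> k <= m -> y ^ k <= y ^ m.
Proof.
move=> y1 km; have y0 : 0 < y by apply: lt_le_trans y1.
have : 0 <= m - k by rewrite subr_ge0.
have -> : m = k + (m - k) by rewrite addrC subrK.
rewrite addrC addKr.
case: (m - k) => [dn|dn] // _.
rewrite exprzDr ?unitfE ?gt_eqF //.
change (y ^ (dn:int)) with (y ^+ dn).
rewrite ler_peMr ?exprn_ege1 //; exact/ltW/exprz_gt0.
Qed.

Lemma sum_split_le (F : nat -> R) (K j : nat) (G : R) :
  (1 <= j <= K)%N -> 0 <= G ->
  (forall i, (1 <= i <= K)%N -> i != j -> F i <= G) ->
  \sum_(1 <= i < K.+1) F i <= F j + K%:R * G.
Proof.
move=> hj G0 hF.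
rewrite (bigD1_seq j) /=; last by apply: iota_uniq.
  2: by rewrite mem_index_iota ltnS.
rewrite lerD2l.
apply: (@le_trans _ _ (\sum_(i <- index_iota 1 K.+1) G)).
  rewrite big_mkcond /= big_seq [X in _ <= X]big_seq.
  apply: ler_sum => i; rewrite mem_index_iota ltnS => hi.
  by case: ifP => // /hF; apply.
by rewrite sumr_const_nat subn1 /= mulr_natl.
Qed.
End Pow.

Section Poly.
Variables (R : realType) (K : nat) (ni : nat -> int) (u : nat -> R) (B c3 c4 : R).
Hypothesis hdistinct : forall i j, (1 <= i <= K)%N -> (1 <= j <= K)%N ->
                 ni i = ni j -> i = j.
Hypothesis hn1 : ni 1%N < 0 /\ forall i, (1 <= i <= K)%N -> ni i < 0 -> ni 1%N <= ni i.
Hypothesis hnK : 0 < ni K /\ forall i, (1 <= i <= K)%N -> 0 < ni i -> ni i <= ni K.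
Hypothesis hB : 0 < B.
Hypothesis hc3 : 0 < c3.
Hypothesis hc4 : 0 < c4.
Hypothesis hu : forall i, (1 <= i <= K)%N -> `|u i| <= B.
Hypothesis hu1 : u 1%N <= - c3.
Hypothesis huK : c4 <= u K.

Hypothesis hK1 : (1 <= K)%N.

Lemma G1 (y : R) : 0 < y -> y <= 1 -> y < c3 / (K%:R * B) ->
  \sum_(1 <= i < K.+1) u i * y ^ ni i < 0.
Proof.
move=> y0 y1 yc.
have KB : 0 < K%:R * B by rewrite mulr_gt0 // ltr0n.
apply: (@le_lt_trans _ _ (u 1%N * y ^ ni 1%N + K%:R * (B * y ^ (ni 1%N + 1)))).
  apply: sum_split_le.
  - by rewrite hK1.
  - by rewrite mulr_ge0 ?(ltW hB) // ltW // exprz_gt0.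
  move=> i hi hi1.
  have hlt : ni 1%N + 1 <= ni i.
    have hne : ni i != ni 1%N.
      by apply/eqP => /(hdistinct i 1%N hi (ltac:(by rewrite hK1))) /eqP; rewrite (negbTE hi1).
    case: (ltP (ni i) 0) => hs.
      have := hn1.2 i hi hs; move: hne hs; case: hn1 => h _; lia.
    by move: hs; case: hn1 => h _; lia.
  apply: le_trans (ler_norm _) _; rewrite normrM (ger0_norm (ltW (exprz_gt0 _ y0))).
  apply: ler_pM => //; first exact: ltW (exprz_gt0 _ y0).
    by apply: hu.
  exact: powz_le1.
have hy1 : y ^ (ni 1%N + 1) = y ^ ni 1%N * y by rewrite exprzDr ?unitfE ?gt_eqF // expr1z.
rewrite hy1.
have p0 : 0 < y ^ ni 1%N by exact: exprz_gt0.
have : u 1%N * y ^ ni 1%N <= - c3 * y ^ ni 1%N by rewrite ler_pM2r.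
have : K%:R * B * y < c3 by rewrite mulrC -ltr_pdivlMr.
move=> h1 h2.
have : K%:R * (B * (y ^ ni 1%N * y)) = (K%:R * B * y) * y ^ ni 1%N by ring.
move=> ->.
have : (K%:R * B * y) * y ^ ni 1%N < c3 * y ^ ni 1%N by rewrite ltr_pM2r.
lra.
Qed.

Lemma G2 (y : R) : 1 <= y -> K%:R * B / c4 < y ->
  0 < \sum_(1 <= i < K.+1) u i * y ^ ni i.
Proof.
move=> y1 yc.
have y0 : 0 < y by apply: lt_le_trans y1.
have KB : 0 < K%:R * B by rewrite mulr_gt0 // ltr0n.
have : \sum_(1 <= i < K.+1) (- (u i * y ^ ni i)) <=
      - (u K * y ^ ni K) + K%:R * (B * y ^ (ni K - 1)).
  apply: (@sum_split_le _ (fun i => - (u i * y ^ ni i))).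
  - by rewrite hK1 leqnn.
  - by rewrite mulr_ge0 ?(ltW hB) // ltW // exprz_gt0.
  move=> i hi hiK.
  have hlt : ni i <= ni K - 1.
    have hne : ni i != ni K.
      by apply/eqP => /(hdistinct i K hi (ltac:(by rewrite hK1 leqnn))) /eqP; rewrite (negbTE hiK).
    case: (ltP 0 (ni i)) => hs.
      have := hnK.2 i hi hs; move: hne hs; case: hnK => h _; lia.
    by move: hs; case: hnK => h _; lia.
  apply: le_trans (ler_norm _) _; rewrite normrN normrM (ger0_norm (ltW (exprz_gt0 _ y0))).
  apply: ler_pM => //; first exact: ltW (exprz_gt0 _ y0).
    by apply: hu.
  exact: powz_ge1.
rewrite sumrN.
have hy1 : y ^ ni K = y ^ (ni K - 1) * y.
  by rewrite -[in RHS](expr1z y) -exprzDr ?unitfE ?gt_eqF // subrK.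
rewrite hy1.
have p0 : 0 < y ^ (ni K - 1) by exact: exprz_gt0.
have h2 : c4 * y * y ^ (ni K - 1) <= u K * (y ^ (ni K - 1) * y).
  rewrite [X in _ <= X](_ : _ = u K * y * y ^ (ni K - 1)); last by ring.
  by rewrite ler_pM2r // ler_pM2r.
have : K%:R * B < c4 * y by rewrite [c4 * y]mulrC -ltr_pdivrMr.
move=> h1.
have : K%:R * B * y ^ (ni K - 1) < c4 * y * y ^ (ni K - 1) by rewrite ltr_pM2r.
have : K%:R * (B * y ^ (ni K - 1)) = K%:R * B * y ^ (ni K - 1) by ring.
lra.
Qed.
End Poly.
Section Fam.
Variables (R : realType) (n : nat).
Notation pt := 'rV[R]_n.

Lemma family_bound (N : nat) (F : nat -> R -> pt -> R) (A : set pt) :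
 (forall i, (i <= N)%N -> exists a C eta : R, 0 < eta /\ forall e, 0 < e < eta -> e <= 1 ->
     forall x, A x -> `|F i e x| <= C * powR e a) ->
 exists a C eta : R, 0 < C /\ 0 < eta /\ forall i, (i <= N)%N -> forall e, 0 < e < eta -> e <= 1 ->
     forall x, A x -> `|F i e x| <= C * powR e a.
Proof.
elim: N => [|N IH] H.
  have [a [C [eta [he Hb]]]] := H 0%N (leqnn 0).
  exists a, (`|C| + 1), eta; split; first by rewrite ltr_wpDl.
  split => // i; rewrite leqn0 => /eqP -> e he1 he2 x Ax.
  apply: le_trans (Hb e he1 he2 x Ax) _; apply: ler_wpM2r; first exact: powR_ge0.
  by rewrite ler_wpDr // ler_norm.
have [a1 [C1 [eta1 [hC1 [he1 Hb1]]]]] := IH (fun i hi => H i (leqW hi)).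
have [a2 [C2 [eta2 [he2 Hb2]]]] := H N.+1 (leqnn _).
exists (Num.min a1 a2), (C1 + `|C2|), (Num.min eta1 eta2); split; first by rewrite ltr_wpDr.
split; first by rewrite lt_min he1 he2.
move=> i hi e /andP[e0]; rewrite lt_min => /andP[e1 e2] e3 x Ax.
have ee : 0 < e <= 1 by rewrite e0 e3.
have p1 : powR e a1 <= powR e (Num.min a1 a2) by apply: powR_anti; rewrite // ge_min lexx.
have p2 : powR e a2 <= powR e (Num.min a1 a2) by apply: powR_anti; rewrite // ge_min lexx orbT.
have q0 := powR_ge0 e (Num.min a1 a2).
rewrite leq_eqVlt ltnS in hi; case/orP: hi => [/eqP ->|hi].
  apply: le_trans (Hb2 e (ltac:(by rewrite e0 e2)) e3 x Ax) _.
  apply: (@le_trans _ _ (`|C2| * powR e a2)); first by apply: ler_wpM2r; rewrite ?powR_ge0 ?ler_norm.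
  rewrite mulrDl; apply: le_trans (ler_wpM2l (normr_ge0 _) p2) _.
  by rewrite lerDr mulr_ge0 // ltW.
apply: le_trans (Hb1 i hi e (ltac:(by rewrite e0 e1)) e3 x Ax) _.
rewrite mulrDl; apply: le_trans (ler_wpM2l (ltW hC1) p1) _.
by rewrite lerDl mulr_ge0.
Qed.
End Fam.
Lemma core (R : realType) (n : nat) (Omega : set 'rV[R]_n) (K : nat) (ni : nat -> int)
 (b : nat -> R -> 'rV[R]_n -> R) (rho : R -> 'rV[R]_n -> R) (e B c3 c4 c5 : R) :
 closure Omega !=set0 -> (1 <= K)%N ->
 (forall i j, (1 <= i <= K)%N -> (1 <= j <= K)%N -> ni i = ni j -> i = j) ->
 (ni 1%N < 0 /\ forall i, (1 <= i <= K)%N -> ni i < 0 -> ni 1%N <= ni i) ->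
 (0 < ni K /\ forall i, (1 <= i <= K)%N -> 0 < ni i -> ni i <= ni K) ->
 0 < B -> 0 < c3 -> 0 < c4 -> 0 < c5 ->
 (forall i, (1 <= i <= K)%N -> forall x, closure Omega x -> `|b i e x| <= B) ->
 (forall x, closure Omega x -> `|rho e x| <= B) ->
 (forall x, closure Omega x -> b 1%N e x <= - c3) ->
 (forall x, closure Omega x -> c4 <= b K e x) ->
 (forall x, closure Omega x -> c5 <= rho e x) ->
 [/\ 0 <= alpha_net Omega K ni b rho e <= 2 + K%:R * B / c4,
     alpha_net Omega K ni b rho e = 0 \/
       Num.min (Num.min 1 (c3 / (K%:R * B)) / 2) c5 <= alpha_net Omega K ni b rho e &
     Num.min 1 (c3 / (K%:R * B)) / 2 <= beta_net Omega K ni b rho e <= 2 + K%:R * B / c4 + B].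
Proof.
move=> [x0 cx0] hK1 hd hn1 hnK hB hc3 hc4 hc5 hbB hrB hb1 hbK hr5.
set lo := Num.min 1 (c3 / (K%:R * B)) / 2.
set hi := 2 + K%:R * B / c4.
have KB : 0 < K%:R * B by rewrite mulr_gt0 // ltr0n.
have q0 : 0 < c3 / (K%:R * B) by rewrite divr_gt0.
have lo0 : 0 < lo by rewrite /lo divr_gt0 // lt_min ltr01 q0.
have lo1 : lo <= 1 / 2 by rewrite /lo ler_pM2r // ge_min lexx.
have loq : lo < c3 / (K%:R * B).
  apply: le_lt_trans (_ : c3 / (K%:R * B) / 2 < _); last by rewrite ltr_pdivrMr // ltr_pMr // ltr1n.
  by rewrite /lo ler_pM2r // ge_min lexx orbT.
have hd0 : 0 <= K%:R * B / c4 by apply: divr_ge0; apply: ltW.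
have hi1 : 1 <= hi by rewrite /hi; lra.
have hiK : K%:R * B / c4 < hi by rewrite /hi ltrDr.
have hilo : lo < hi by apply: (le_lt_trans lo1); apply: lt_le_trans hi1; lra.
set s := fun i => sup_on (closure Omega) (b i e).
set t := fun i => inf_on (closure Omega) (b i e).
have hs : forall i, (1 <= i <= K)%N -> `|s i| <= B.
  move=> i hi0; apply: sup_abs; first exact: ltW.
  by move=> y [x cx <-]; apply: hbB.
have ht : forall i, (1 <= i <= K)%N -> `|t i| <= B.
  move=> i hi0; apply: inf_abs; first exact: ltW.
  by move=> y [x cx <-]; apply: hbB.
have hK1' : (1 <= K <= K)%N by rewrite hK1 leqnn.
have h11 : (1 <= 1 <= K)%N by rewrite hK1.
have ne : forall i, [set b i e x | x in closure Omega] !=set0.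
  by move=> i; exists (b i e x0), x0.
have s1 : s 1%N <= - c3.
  apply: ge_sup; first exact: ne.
  by move=> y [x cx <-]; apply: hb1.
have t1 : t 1%N <= - c3.
  apply: le_trans (hb1 x0 cx0).
  apply: ge_inf; last by exists x0.
  exists (- B) => y [x cx <-]; have := hbB _ h11 x cx; rewrite ler_norml => /andP[].
  by [].
have sK : c4 <= s K.
  apply: le_trans (hbK x0 cx0) _.
  apply: ub_le_sup; last by exists x0.
  exists B => y [x cx <-]; have := hbB _ hK1' x cx; rewrite ler_norml => /andP[].
  by [].
have tK : c4 <= t K.
  apply: lb_le_inf; first exact: ne.
  by move=> y [x cx <-]; apply: hbK.
have Gs1 := @G1 _ _ _ _ _ _ _ hd hn1 hnK hB hc3 hc4 hs s1 sK hK1.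
have Gs2 := @G2 _ _ _ _ _ _ _ hd hn1 hnK hB hc3 hc4 hs s1 sK hK1.
have Gt1 := @G1 _ _ _ _ _ _ _ hd hn1 hnK hB hc3 hc4 ht t1 tK hK1.
have Gt2 := @G2 _ _ _ _ _ _ _ hd hn1 hnK hB hc3 hc4 ht t1 tK hK1.
set SA := [set c | 0 < c /\ forall y, 0 < y < c ->
         \sum_(1 <= i < K.+1) sup_on (closure Omega) (b i e) * y ^ ni i < 0].
have loSA : SA lo.
  split => // y /andP[y0 ylo]; apply: Gs1 => //.
    apply: le_trans (ltW ylo) (le_trans lo1 _); lra.
  exact: lt_trans loq.
have ubSA : ubound SA hi.
  move=> c [c0 Hc]; rewrite leNgt; apply/negP => chi.
  have := Hc hi; rewrite (lt_le_trans _ hi1) ?ltr01 // chi => /(_ isT).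
  by rewrite ltNge (ltW (Gs2 _ hi1 hiK)).
have alA : lo <= alpha' Omega K ni b e.
  by apply: (ub_le_sup (E := SA)); [exists hi | ].
have auA : alpha' Omega K ni b e <= hi by apply: ge_sup => //; exists lo.
set SB := [set c | forall y, c < y ->
         0 < \sum_(1 <= i < K.+1) inf_on (closure Omega) (b i e) * y ^ ni i].
have hiSB : SB hi.
  move=> y hy; apply: Gt2; first by apply: le_trans (ltW hy).
  exact: lt_trans hy.
have lbSB : lbound SB lo.
  move=> c Hc; rewrite leNgt; apply/negP => clo.
  pose y := (Num.max c 0 + lo) / 2.
  have m0 : 0 <= Num.max c 0 by rewrite le_max lexx orbT.
  have mlo : Num.max c 0 < lo by rewrite gt_max clo lo0.
  have cm : c <= Num.max c 0 by rewrite le_max lexx.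
  have cy : c < y by rewrite /y; lra.
  have y0 : 0 < y by rewrite /y; lra.
  have ylo : y < lo by rewrite /y; lra.
  have y1 : y <= 1 by lra.
  have yq : y < c3 / (K%:R * B) by exact: lt_trans loq.
  by have := Hc y cy; rewrite ltNge (ltW (Gt1 _ y0 y1 yq)).
have blB : lo <= beta' Omega K ni b e by apply: lb_le_inf => //; exists hi.
have buB : beta' Omega K ni b e <= hi by apply: (ge_inf (E := SB)) => //; exists lo.
have bd : forall x, bdry Omega x -> closure Omega x by move=> x [].
have Sb : `|sup_on (bdry Omega) (rho e)| <= B.
  apply: sup_abs; first exact: ltW.
  by move=> y [x /bd cx <-]; apply: hrB.
have Ib : inf_on (bdry Omega) (rho e) = 0 \/ c5 <= inf_on (bdry Omega) (rho e).
  case: (pselect ([set rho e x | x in bdry Omega] !=set0)) => hne.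
    right; apply: lb_le_inf => // y [x /bd cx <-]; exact: hr5.
  left; rewrite /inf_on.
  have -> : [set rho e x | x in bdry Omega] = set0.
    by apply/seteqP; split => // y Ey; apply: hne; exists y.
  by rewrite inf0.
rewrite /alpha_net /beta_net; split.
- case: Ib => [->|hI].
    have : Num.min (alpha' Omega K ni b e) 0 = 0.
      by apply/min_idPr; apply: le_trans alA; exact: ltW.
    by move=> ->; rewrite lexx /= (le_trans (ltW lo0)) // ltW.
  apply/andP; split.
    by rewrite le_min (le_trans (ltW lo0) alA) (le_trans (ltW hc5) hI).
  by rewrite ge_min auA.
- case: Ib => [->|hI].
    left; apply/min_idPr; apply: le_trans alA; exact: ltW.
  right; rewrite le_min; apply/andP; split.
    by rewrite ge_min alA.
  by rewrite ge_min hI orbT.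
- apply/andP; split; first by rewrite le_max blB.
  rewrite ge_max; apply/andP; split.
    by apply: le_trans buB _; rewrite lerDl ltW.
  apply: le_trans (ler_norm _) (le_trans Sb _).
  rewrite lerDr; apply: le_trans (ltW (lt_le_trans ltr01 hi1)) _; exact: lexx.
Qed.
Arguments mod_cst {R}. Arguments mod_pow {R}. Arguments mod_inv_pow {R}.
Arguments mod_add {R f g}. Arguments mod_mul {R f g}. Arguments mod_le {R f g}.

Lemma lo_inv (R : realType) (q : R) : 0 < q -> (Num.min 1 q / 2)^-1 <= 2 + 2 * q^-1.
Proof.
move=> q0; have q'0 : 0 < q^-1 by rewrite invr_gt0.
have [h|h] := leP 1 q.
  rewrite mul1r invrK; lra.
rewrite invfM invrK; lra.
Qed.

Lemma inv_min_le (R : realType) (x y z : R) : 0 < x -> 0 < y -> Num.min x y <= z ->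
  z^-1 <= x^-1 + y^-1.
Proof.
move=> x0 y0 hz.
have m0 : 0 < Num.min x y by rewrite lt_min x0 y0.
have z0 : 0 < z := lt_le_trans m0 hz.
have hx : 0 < x^-1 by rewrite invr_gt0.
have hy : 0 < y^-1 by rewrite invr_gt0.
apply: (@le_trans _ _ (Num.min x y)^-1).
  by rewrite lef_pV2 // posrE.
have [h|h] := leP x y.
  lra.
lra.
Qed.
Theorem lemma5p6 (R : realType) (n : nat) (hn : (0 < n)%N)
  (Omega : set 'rV[R]_n) (hOmega : smooth_domain Omega)
  (al : R) (hal : 0 < al < 1)
  (K : nat) (ni : nat -> int)
  (hdistinct : forall i j, (1 <= i <= K)%N -> (1 <= j <= K)%N ->
                 ni i = ni j -> i = j)
  (a : 'I_n -> 'I_n -> R -> 'rV[R]_n -> R)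
  (b : nat -> R -> 'rV[R]_n -> R)
  (rho : R -> 'rV[R]_n -> R)
  (haEM : forall i j, EMnet Omega (a i j))
  (hbEM : forall i, (1 <= i <= K)%N -> EMnet Omega (b i))
  (hrhoEM : EMnet Omega rho)
  (lam : R -> R) (C1 a1 : R) (hC1 : 0 < C1)
  (Lam : nat -> R -> R) (C2 a2 : nat -> R) (hC2 : forall k, 0 < C2 k)
  (C3 a3 C4 a4 C5 a5 : R)
  (hC3 : 0 < C3) (hC4 : 0 < C4) (hC5 : 0 < C5)
  (hsym : forall eps, 0 < eps < 1 -> forall i j x, closure Omega x ->
            a i j eps x = a j i eps x)
  (hell : forall eps, 0 < eps < 1 -> forall x, closure Omega x ->
            forall xi : 'rV[R]_n,
              lam eps * (\sum_(i < n) xi 0 i ^+ 2)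
                <= \sum_(i < n) \sum_(j < n) a i j eps x * xi 0 i * xi 0 j /\
              C1 * powR eps a1 * (\sum_(i < n) xi 0 i ^+ 2)
                <= lam eps * (\sum_(i < n) xi 0 i ^+ 2))
  (hholder : forall (k : nat) eps, 0 < eps < 1 ->
     (forall i j, (holder_norm Omega k al (a i j eps) <= (Lam k eps)%:E)%E) /\
     (forall i, (1 <= i <= K)%N ->
        (holder_norm Omega k al (b i eps) <= (Lam k eps)%:E)%E) /\
     Lam k eps <= C2 k * powR eps (a2 k))
  (hneg : exists i, (1 <= i <= K)%N /\ ni i < 0)
  (hn1 : ni 1%N < 0 /\ forall i, (1 <= i <= K)%N -> ni i < 0 -> ni 1%N <= ni i)
  (hb1 : forall eps, 0 < eps < 1 -> forall x, closure Omega x ->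
           b 1%N eps x <= - (C3 * powR eps a3))
  (hpos : exists i, (1 <= i <= K)%N /\ 0 < ni i)
  (hnK : 0 < ni K /\ forall i, (1 <= i <= K)%N -> 0 < ni i -> ni i <= ni K)
  (hbK : forall eps, 0 < eps < 1 -> forall x, closure Omega x ->
           C4 * powR eps a4 <= b K eps x)
  (hrho : forall eps, 0 < eps < 1 -> forall x, closure Omega x ->
           C5 * powR eps a5 <= rho eps x) :
  moderate (alpha_net Omega K ni b rho) /\
  moderate (beta_net Omega K ni b rho) /\
  moderate (fun eps => (alpha_net Omega K ni b rho eps)^-1) /\
  moderate (fun eps => (beta_net Omega K ni b rho eps)^-1).
Proof.
have hK1 : (1 <= K)%N by case: hneg => i [/andP[h1 h2] _]; exact: leq_trans h2.
have cl0 : closure Omega !=set0.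
  by case: hOmega => _ [[x Ox] _]; exists x; apply: subset_closure.
pose F := fun i => if i == 0%N then rho else b i.
have [aB [CB [etaB [hCB [hetaB HB]]]]] : exists a C eta : R, 0 < C /\ 0 < eta /\
   forall i, (i <= K)%N -> forall e, 0 < e < eta -> e <= 1 ->
     forall x, closure Omega x -> `|F i e x| <= C * powR e a.
  apply: family_bound => i hi; rewrite /F; case: eqP => [_|/eqP i0].
    exact: EM_bound0.
  by apply: EM_bound0; apply: hbEM; rewrite lt0n i0.
set eta := Num.min etaB 1.
have heta : 0 < eta by rewrite lt_min hetaB ltr01.
have key : forall e, 0 < e < eta ->
 [/\ 0 <= alpha_net Omega K ni b rho e <= 2 + K%:R * (CB * powR e aB) / (C4 * powR e a4),
     alpha_net Omega K ni b rho e = 0 \/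
       Num.min (Num.min 1 ((C3 * powR e a3) / (K%:R * (CB * powR e aB))) / 2) (C5 * powR e a5)
         <= alpha_net Omega K ni b rho e &
     Num.min 1 ((C3 * powR e a3) / (K%:R * (CB * powR e aB))) / 2 <= beta_net Omega K ni b rho e
       <= 2 + K%:R * (CB * powR e aB) / (C4 * powR e a4) + CB * powR e aB].
  move=> e /andP[e0]; rewrite lt_min => /andP[eB e1].
  have ee : 0 < e < 1 by rewrite e0 e1.
  have ee' : 0 < e < etaB by rewrite e0 eB.
  apply: core => //.
  - by rewrite mulr_gt0 // powR_gt0.
  - by rewrite mulr_gt0 // powR_gt0.
  - by rewrite mulr_gt0 // powR_gt0.
  - by rewrite mulr_gt0 // powR_gt0.
  - move=> i hi x cx; have := HB i (ltac:(by case/andP: hi)) e ee' (ltW e1) x cx.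
    by rewrite /F; case: eqP => // i0; move: hi; rewrite i0.
  - by move=> x cx; have := HB 0%N (leq0n _) e ee' (ltW e1) x cx.
  - exact: hb1 ee.
  - exact: hbK ee.
  - exact: hrho ee.
have pos : forall C0 a0 e : R, 0 < C0 -> 0 < e -> 0 < C0 * powR e a0.
  by move=> C0 a0 e hC he; apply: mulr_gt0 => //; apply: powR_gt0.
have KB0 : forall e, 0 < e -> 0 < K%:R * (CB * powR e aB).
  by move=> e he; rewrite mulr_gt0 ?ltr0n ?pos.
have Mhi : moderate (fun e => 2 + K%:R * (CB * powR e aB) / (C4 * powR e a4)).
  exact: (mod_add (mod_cst 2) (mod_mul (mod_mul (mod_cst K%:R) (mod_pow CB aB)) (mod_inv_pow C4 a4 hC4))).
have Mlo : moderate (fun e => 2 + 2 * (K%:R * (CB * powR e aB) * (C3 * powR e a3)^-1)).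
  exact: (mod_add (mod_cst 2) (mod_mul (mod_cst 2) (mod_mul (mod_mul (mod_cst K%:R) (mod_pow CB aB)) (mod_inv_pow C3 a3 hC3)))).
have hiabs : forall e, 0 < e -> 0 < 2 + K%:R * (CB * powR e aB) / (C4 * powR e a4).
  move=> e he; have : 0 < K%:R * (CB * powR e aB) / (C4 * powR e a4).
    by rewrite divr_gt0 ?KB0 ?pos.
  lra.
have loabs : forall e, 0 < e ->
  (Num.min 1 ((C3 * powR e a3) / (K%:R * (CB * powR e aB))) / 2)^-1 <=
  2 + 2 * (K%:R * (CB * powR e aB) * (C3 * powR e a3)^-1).
  move=> e he; rewrite -(invf_div (C3 * powR e a3)); apply: lo_inv; by rewrite divr_gt0 ?KB0 ?pos.
have lo0 : forall e, 0 < e -> 0 < Num.min 1 ((C3 * powR e a3) / (K%:R * (CB * powR e aB))) / 2.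
  by move=> e he; rewrite divr_gt0 // lt_min ltr01 divr_gt0 ?KB0 ?pos.
split; [|split; [|split]].
- apply: (mod_le Mhi); exists eta; split => // e he _.
  have [/andP[h0 h1] _ _] := key e he.
  by rewrite ger0_norm // ger0_norm ?h1 // ltW // hiabs //; case/andP: he.
- apply: (mod_le (mod_add Mhi (mod_pow CB aB))); exists eta; split => // e he _.
  have [_ _ /andP[h0 h1]] := key e he.
  have e0 : 0 < e by case/andP: he.
  rewrite ger0_norm; last by apply: le_trans h0; apply: ltW; apply: lo0.
  rewrite ger0_norm //; apply: addr_ge0; [exact: ltW (hiabs e e0)| exact: ltW (pos _ _ _ hCB e0)].
- have M3 := mod_add Mlo (mod_inv_pow C5 a5 hC5).
  apply: (mod_le M3); exists eta; split => // e he _.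
  have e0 : 0 < e by case/andP: he.
  have [_ h2 _] := key e he.
  have R0 : 0 < 2 + 2 * (K%:R * (CB * powR e aB) * (C3 * powR e a3)^-1) + (C5 * powR e a5)^-1.
    have := loabs e e0; have := lo0 e e0.
    have : 0 < (C5 * powR e a5)^-1 by rewrite invr_gt0 pos.
    move=> h3 h4 h5.
    have : 0 < (Num.min 1 (C3 * powR e a3 / (K%:R * (CB * powR e aB))) / 2)^-1 by rewrite invr_gt0.
    lra.
  rewrite [X in _ <= X]ger0_norm; last exact: ltW.
  case: h2 => [->|h2]; first by rewrite invr0 normr0 ltW.
  have hz := @inv_min_le _ _ _ _ (lo0 e e0) (pos _ _ _ hC5 e0) h2.
  have z0 : 0 < alpha_net Omega K ni b rho e.
    by apply: lt_le_trans h2; rewrite lt_min lo0 // pos.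
  rewrite ger0_norm; last by rewrite invr_ge0 ltW.
  apply: le_trans hz _; rewrite lerD2r; exact: loabs.
- apply: (mod_le Mlo); exists eta; split => // e he _.
  have e0 : 0 < e by case/andP: he.
  have [_ _ /andP[h0 _]] := key e he.
  have b0 : 0 < beta_net Omega K ni b rho e by apply: lt_le_trans h0; exact: lo0.
  rewrite ger0_norm; last by rewrite invr_ge0 ltW.
  have := loabs e e0; move=> h3.
  have h4 : (beta_net Omega K ni b rho e)^-1 <=
     (Num.min 1 (C3 * powR e a3 / (K%:R * (CB * powR e aB))) / 2)^-1.
    by rewrite lef_pV2 ?posrE ?lo0.
  apply: le_trans h4 (le_trans h3 _); exact: ler_norm.
Qed.
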